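(* The following two identities hold: $$\sum_{k=1}^\infty\frac{(95k^2-84k+16)(9/8)^{k-1}}{k(3k-1)(3k-2)\binom{4k}k}=\frac{2\pi}{\sqrt3}$$ and $$\sum_{k=1}^\infty\frac{(5k^2-4k+1)8^{k}}{k(3k-1)(3k-2)\binom{4k}k}=\frac{3\pi}{2}.$$ *)

(* Defs.v *)
From Stdlib Require Import Reals.
From Coquelicot Require Import Coquelicot.
Open Scope R_scope.

Definition term1 (k : nat) : R :=
  let x := INR k in
  (95 * x ^ 2 - 84 * x + 16) * (9 / 8) ^ (k - 1)
  / (x * (3 * x - 1) * (3 * x - 2) * Binomial.C (4 * k) k).

Definition term2 (k : nat) : R :=
  let x := INR k in
  (5 * x ^ 2 - 4 * x + 1) * 8 ^ k
  / (x * (3 * x - 1) * (3 * x - 2) * Binomial.C (4 * k) k).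

(* Main.v *)
Require Import Defs.
From Stdlib Require Import Reals Lra Lia Factorial.
From Coquelicot Require Import Coquelicot.
Open Scope R_scope.

Lemma is_RInt_val (f : R -> R) (a b l l' : R) : is_RInt f a b l -> l = l' -> is_RInt f a b l'.
Proof. intros H ->; exact H. Qed.

Definition beta (m n : nat) : R :=
  INR (fact m) * INR (fact n) / INR (fact (m + n + 1)).

Lemma INR_fact_pos n : 0 < INR (fact n).
Proof. apply lt_0_INR, lt_O_fact. Qed.

Lemma is_RInt_pow m : is_RInt (fun x => x ^ m) 0 1 (/ INR (S m)).
Proof.
  assert (Hm : INR (S m) <> 0) by (apply not_0_INR; lia).
  eapply is_RInt_val.
  { apply (is_RInt_derive (fun x => x ^ (S m) / INR (S m))).
    - intros x _. auto_derive; auto. simpl pred. field. auto.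
    - intros x _. apply (@ex_derive_continuous R_AbsRing R_NormedModule). auto_derive. auto. }
  rewrite pow1, pow_i by lia. unfold minus, plus, opp; simpl. field. auto.
Qed.

Lemma beta_RInt n : forall m, is_RInt (fun x => x ^ m * (1 - x) ^ n) 0 1 (beta m n).
Proof.
  induction n as [|n IH]; intro m.
  - eapply is_RInt_val.
    + eapply is_RInt_ext. 2: apply (is_RInt_pow m). intros x _; simpl; ring.
    + unfold beta. replace (m + 0 + 1)%nat with (S m) by lia.
      rewrite fact_simpl, mult_INR. simpl (fact 0). 
      pose proof (INR_fact_pos m). assert (INR (S m) <> 0) by (apply not_0_INR; lia).
      simpl (INR 1). field. split; lra.
  - eapply is_RInt_val.
    + eapply is_RInt_ext. 2: apply (is_RInt_minus _ _ _ _ _ _ (IH m) (IH (S m))).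
      intros x _; unfold minus, plus, opp; simpl. ring.
    + unfold beta, minus, plus, opp; simpl.
      replace (m + S n + 1)%nat with (S (m + n + 1)) by lia.
      rewrite ?fact_simpl.
      pose proof (INR_fact_pos m). pose proof (INR_fact_pos n). pose proof (INR_fact_pos (m+n+1)).
      pose proof (pos_INR m). pose proof (pos_INR n).
      rewrite ?mult_INR, ?plus_INR, ?S_INR, ?mult_INR, ?plus_INR. simpl (INR 1).
      field. repeat split; nra.
Qed.

Lemma lim_aux (I M q : R) (s : R) : Rabs q < 1 ->
  is_lim_seq (fun N => I + s * M * q ^ (S N)) I.
Proof.
  intros Hq.
  assert (H1 : is_lim_seq (fun N => q ^ (S N)) 0).
  { apply (is_lim_seq_incr_1 (fun n => q ^ n)). apply is_lim_seq_geom; auto. }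
  pose proof (is_lim_seq_plus' _ _ _ _ (is_lim_seq_const I)
     (is_lim_seq_mult' _ _ _ _ (is_lim_seq_const (s * M)) H1)) as H.
  replace (I + s * M * 0) with I in H by ring. exact H.
Qed.

Lemma series_int (h r : R -> R) (a : nat -> R) (I M q : R) :
  0 <= q < 1 ->
  (forall x, 0 <= x <= 1 -> Rabs (r x) <= q) ->
  (forall x, 0 <= x <= 1 -> Rabs (h x / (1 - r x)) <= M) ->
  is_RInt (fun x => h x / (1 - r x)) 0 1 I ->
  (forall k, is_RInt (fun x => h x * (r x) ^ k) 0 1 (a k)) ->
  is_series a I.
Proof.
  intros Hq Hr HM HI Ha.
  assert (HS : forall N, is_RInt (fun x => h x * sum_f_R0 (fun k => r x ^ k) N) 0 1 (sum_n a N)).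
  { induction N as [|N IH].
    - rewrite sum_O. eapply is_RInt_ext. 2: apply (Ha 0%nat). intros x _. simpl. ring.
    - rewrite sum_Sn. eapply is_RInt_ext. 2: apply (is_RInt_plus _ _ _ _ _ _ IH (Ha (S N))).
      intros x _. unfold plus; simpl. ring. }
  assert (HB : forall N, Rabs (I - sum_n a N) <= M * q ^ (S N)).
  { intro N.
    pose proof (is_RInt_minus _ _ _ _ _ _ HI (HS N)) as HD.
    assert (HD' : is_RInt (fun x => h x / (1 - r x) * r x ^ (S N)) 0 1 (I - sum_n a N)).
    { eapply is_RInt_ext. 2: exact HD. intros x Hx.
      rewrite Rmin_left, Rmax_right in Hx by lra.
      assert (Hx' : 0 <= x <= 1) by lra. specialize (Hr x Hx').
      assert (r x <> 1) by (intro E; rewrite E, Rabs_R1 in Hr; lra).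
      assert (1 - r x <> 0) by lra.
      assert (E : h x / (1 - r x) - h x * sum_f_R0 (fun k => r x ^ k) N = h x / (1 - r x) * r x ^ (S N)).
      { rewrite tech3 by auto. field. auto. }
      rewrite <- E. reflexivity. }
    replace (I - sum_n a N) with (RInt (fun x => h x / (1 - r x) * r x ^ (S N)) 0 1)
      by (apply is_RInt_unique; exact HD').
    replace (M * q ^ S N) with ((1 - 0) * (M * q ^ S N)) by ring.
    apply abs_RInt_le_const. lra. eexists; exact HD'.
    intros t Ht. rewrite Rabs_mult, <- RPow_abs.
    apply Rmult_le_compat; try apply Rabs_pos; auto.
    apply pow_le, Rabs_pos. apply pow_incr. split; [apply Rabs_pos| auto]. }
  assert (L : is_lim_seq (sum_n a) I). 2: exact L.
  apply (is_lim_seq_le_le (fun N => I + (-1) * M * q ^ (S N)) _ (fun N => I + 1 * M * q ^ (S N))).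
  - intro N. specialize (HB N). apply Rabs_le_between' in HB. 
    split; lra.
  - apply lim_aux. rewrite Rabs_right; lra.
  - apply lim_aux. rewrite Rabs_right; lra.
Qed.

Lemma term1_val k : term1 (S k) =
  (9/8)^k / 4 * (117 * beta (S k) (S (S (3*k))) + 27 * beta (S (S k)) (S (3*k))
                 + 6 * beta (S (S (S k))) (3*k)).
Proof.
  unfold term1, beta, Binomial.C.
  replace (S k - 1)%nat with k by lia.
  replace (4 * S k - S k)%nat with (S (S (S (3*k)))) by lia.
  replace (S k + S (S (3 * k)) + 1)%nat with (4 * S k)%nat by lia.
  replace (S (S k) + S (3 * k) + 1)%nat with (4 * S k)%nat by lia.
  replace (S (S (S k)) + 3 * k + 1)%nat with (4 * S k)%nat by lia.
  rewrite !fact_simpl.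
  pose proof (INR_fact_pos k). pose proof (INR_fact_pos (3*k)). pose proof (INR_fact_pos (4 * S k)).
  pose proof (pos_INR k).
  rewrite ?mult_INR, ?S_INR, ?mult_INR. simpl (INR 3).
  field. repeat split; nra.
Qed.

Lemma int3 (c1 c2 c3 : R) m1 n1 m2 n2 m3 n3 :
  is_RInt (fun x => c1 * (x^m1*(1-x)^n1) + c2*(x^m2*(1-x)^n2) + c3*(x^m3*(1-x)^n3)) 0 1
    (c1*beta m1 n1 + c2*beta m2 n2 + c3 * beta m3 n3).
Proof.
  pose proof (is_RInt_plus _ _ _ _ _ _
    (is_RInt_plus _ _ _ _ _ _ (is_RInt_scal _ _ _ c1 _ (beta_RInt n1 m1))
                              (is_RInt_scal _ _ _ c2 _ (beta_RInt n2 m2)))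
    (is_RInt_scal _ _ _ c3 _ (beta_RInt n3 m3))) as H.
  exact H.
Qed.

Definition r1 (x : R) := 9/8 * (x * (1-x)^3).
Definition h1 (x : R) := (117*x*(1-x)^2 + 27*x^2*(1-x) + 6*x^3)/4.

Lemma powk_split (c x : R) k : (c * (x * (1-x)^3))^k = c^k * (x^k * (1-x)^(3*k)).
Proof. rewrite !Rpow_mult_distr, pow_mult. reflexivity. Qed.

Lemma term1_int k : is_RInt (fun x => h1 x * r1 x ^ k) 0 1 (term1 (S k)).
Proof.
  rewrite term1_val.
  eapply is_RInt_val.
  - eapply is_RInt_ext. 2: apply (int3 ((9/8)^k/4*117) ((9/8)^k/4*27) ((9/8)^k/4*6)
        (S k) (S (S (3*k))) (S (S k)) (S (3*k)) (S (S (S k))) (3*k)).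
    intros x _. unfold h1, r1. rewrite powk_split. cbn [pow].
    match goal with |- ?a = ?b => change (@eq R a b) end. set (A := (9/8)^k). set (B := x^k). set (C := (1-x)^(3*k)). field.
  - ring.
Qed.

Lemma is_derive_val (f : R -> R) x (l l' : R) : is_derive f x l -> l = l' -> is_derive f x l'.
Proof. intros H ->; exact H. Qed.

Lemma sqrt3_sq : sqrt 3 * sqrt 3 = 3.
Proof. apply sqrt_sqrt; lra. Qed.

Lemma d_atan3 x : is_derive (fun x => 2 * sqrt 3 * atan (sqrt 3 * x)) x (6 / (3 * x^2 + 1)).
Proof.
  eapply is_derive_val. { auto_derive. auto. reflexivity. }
  pose proof sqrt3_sq as Hs.
  replace (1 + sqrt 3 * x * (sqrt 3 * x * 1)) with (3 * x^2 + 1)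
    by (rewrite <- Hs at 1; ring).
  replace (2 * sqrt 3 * (sqrt 3 * 1 * / (3 * x ^ 2 + 1))) with (2 * (sqrt 3 * sqrt 3) * / (3 * x ^ 2 + 1)) by ring.
  rewrite Hs. field. nra.
Qed.

Definition G1 (x : R) := (16/3*ln(3*x^2+1) + 16/3*ln(3*x^2-9*x+8)) + 2 * sqrt 3 * atan (sqrt 3 * x).

Lemma quad1_pos x : 0 < 3*x^2-9*x+8.
Proof. pose proof (pow2_ge_0 (x - 3/2)). nra. Qed.

Lemma den1 x : 1 - r1 x = (3*x^2+1)*(3*x^2-9*x+8)/8.
Proof. unfold r1. field. Qed.

Lemma G1_deriv x : is_derive G1 x (h1 x / (1 - r1 x)).
Proof.
  pose proof (quad1_pos x). assert (0 < 3*x^2+1) by nra.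
  eapply is_derive_val.
  - apply (is_derive_plus (fun x => 16/3*ln(3*x^2+1) + 16/3*ln(3*x^2-9*x+8))
          (fun x => 2 * sqrt 3 * atan (sqrt 3 * x))).
    + auto_derive. repeat split; nra. reflexivity.
    + apply d_atan3.
  - unfold plus; simpl. rewrite den1. unfold h1. field. split; nra.
Qed.

Lemma atan_sqrt3 : atan (sqrt 3) = PI / 3.
Proof. rewrite <- tan_PI3. apply atan_tan. pose proof PI_RGT_0. lra. Qed.

Lemma int1 : is_RInt (fun x => h1 x / (1 - r1 x)) 0 1 (2 * PI / sqrt 3).
Proof.
  eapply is_RInt_val.
  - apply (is_RInt_derive G1).
    + intros x _. apply G1_deriv.
    + intros x _. apply (@ex_derive_continuous R_AbsRing R_NormedModule).
      pose proof (quad1_pos x). assert (0 < 3*x^2+1) by nra.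
      apply (ex_derive_ext (fun x => h1 x * 8 / ((3*x^2+1)*(3*x^2-9*x+8)))).
      * intro t. rewrite den1. pose proof (quad1_pos t). assert (0 < 3*t^2+1) by nra. match goal with |- ?a = ?b => change (@eq R a b) end. field. split; nra.
      * unfold h1. auto_derive. apply Rgt_not_eq.
        apply Rmult_lt_0_compat; nra.
  - unfold minus, plus, opp, G1; simpl.
    replace (3 * (1 * (1 * 1)) + 1) with 4 by ring.
    replace (3 * (1 * (1 * 1)) - 9 * 1 + 8) with 2 by ring.
    replace (3 * (0 * (0 * 1)) + 1) with 1 by ring.
    replace (3 * (0 * (0 * 1)) - 9 * 0 + 8) with (4 * 2) by ring.
    rewrite ln_mult, ln_1 by lra. rewrite !Rmult_0_r, atan_0, !Rmult_1_r, atan_sqrt3.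
    pose proof sqrt3_sq. assert (0 < sqrt 3) by (apply sqrt_lt_R0; lra).
    assert (E : 2 * PI / sqrt 3 = 2 * sqrt 3 * (PI / 3)).
    { apply Rmult_eq_reg_r with (sqrt 3); [|lra].
      replace (2 * sqrt 3 * (PI / 3) * sqrt 3) with (2 * (sqrt 3 * sqrt 3) * PI / 3) by field.
      rewrite H. field. lra. }
    match goal with |- ?a = ?b => change (@eq R a b) end.
    rewrite E. field.
Qed.

Lemma div_bound a b M : 0 <= a -> 0 < b -> a <= M * b -> Rabs (a / b) <= M.
Proof.
  intros Ha Hb HM. rewrite Rabs_right.
  - apply (Rmult_le_reg_r b); auto. replace (a / b * b) with a by (field; lra). exact HM.
  - apply Rle_ge. unfold Rdiv. apply Rmult_le_pos; auto. left; apply Rinv_0_lt_compat; auto.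
Qed.

Lemma w_bounds x : 0 <= x <= 1 -> 0 <= x * (1-x)^3 <= 1/4.
Proof.
  intros Hx. assert (0 <= 1 - x) by lra.
  assert (0 <= (1-x)^2 <= 1) by (split; nra).
  assert (x * (1-x) <= 1/4) by (pose proof (pow2_ge_0 (x - 1/2)); nra).
  assert (0 <= x*(1-x)) by nra.
  replace (x * (1-x)^3) with (x * (1-x) * (1-x)^2) by ring.
  split; nra.
Qed.

Lemma series1 : is_series (fun n : nat => term1 (S n)) (2 * PI / sqrt 3).
Proof.
  apply (series_int h1 r1 _ _ 60 (9/32)).
  - lra.
  - intros x Hx. pose proof (w_bounds x Hx). unfold r1. rewrite Rabs_right; lra.
  - intros x Hx. pose proof (w_bounds x Hx). apply div_bound.
    + unfold h1. assert (0 <= 1 - x) by lra. 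
      assert (0 <= x * (1-x)^2) by (apply Rmult_le_pos; [lra| apply pow_le; lra]).
      assert (0 <= x^2 * (1-x)) by (apply Rmult_le_pos; [apply pow_le; lra| lra]).
      assert (0 <= x^3) by (apply pow_le; lra). lra.
    + unfold r1; lra.
    + unfold h1, r1. assert (0 <= 1 - x) by lra.
      assert (x * (1-x)^2 <= 1) by (assert ((1-x)^2 <= 1) by nra; nra).
      assert (x^2 * (1-x) <= 1) by (assert (x^2 <= 1) by nra; nra).
      assert (x^3 <= 1) by (replace (x^3) with (x*(x*x)) by ring; assert (x*x <= 1) by nra; nra).
      lra.
  - apply int1.
  - apply term1_int.
Qed.

Lemma term2_val k : term2 (S k) =
  8^k * (12 * beta (S k) (S (S (3*k))) + 3 * beta (S (S k)) (S (3*k))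
                 + 3 * beta (S (S (S k))) (3*k)).
Proof.
  unfold term2, beta, Binomial.C.
  replace (4 * S k - S k)%nat with (S (S (S (3*k)))) by lia.
  replace (S k + S (S (3 * k)) + 1)%nat with (4 * S k)%nat by lia.
  replace (S (S k) + S (3 * k) + 1)%nat with (4 * S k)%nat by lia.
  replace (S (S (S k)) + 3 * k + 1)%nat with (4 * S k)%nat by lia.
  rewrite !fact_simpl.
  pose proof (INR_fact_pos k). pose proof (INR_fact_pos (3*k)). pose proof (INR_fact_pos (4 * S k)).
  pose proof (pos_INR k).
  rewrite ?mult_INR, ?S_INR, ?mult_INR. simpl (INR 3). simpl (8 ^ S k).
  field. repeat split; nra.
Qed.

Definition r2 (x : R) := 8 * (x * (1-x)^3).
Definition h2 (x : R) := 12*x*(1-x)^2 + 3*x^2*(1-x) + 3*x^3.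

Lemma term2_int k : is_RInt (fun x => h2 x * r2 x ^ k) 0 1 (term2 (S k)).
Proof.
  rewrite term2_val.
  eapply is_RInt_val.
  - eapply is_RInt_ext. 2: apply (int3 (8^k*12) (8^k*3) (8^k*3)
        (S k) (S (S (3*k))) (S (S k)) (S (3*k)) (S (S (S k))) (3*k)).
    intros x _. unfold h2, r2. rewrite powk_split. cbn [pow].
    match goal with |- ?a = ?b => change (@eq R a b) end. field.
  - field.
Qed.

Definition Qv (v : R) := v^4 - 2*v^3 + 2*v + 1.
Definition gv (v : R) := v^2 - v - 1.
Definition GL (x : R) := 3/8 * ln (Qv (2*x-1)) + 3/2 * atan (gv (2*x-1) / (2*x-1)).
Definition GR (x : R) := 3/8 * ln (Qv (2*x-1)) - 3/2 * atan ((2*x-1) / gv (2*x-1)).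

Lemma Qv_pos v : 0 < Qv v.
Proof.
  unfold Qv. replace (v^4 - 2*v^3 + 2*v + 1) with ((v^2-v-1)^2 + v^2) by ring.
  destruct (Req_dec v 0) as [->|Hv].
  - lra.
  - assert (0 < v^2) by (apply pow2_gt_0; auto). pose proof (pow2_ge_0 (v^2-v-1)). lra.
Qed.

Lemma den2 x : 1 - r2 x = Qv (2*x-1) / 2.
Proof. unfold r2, Qv. field. Qed.

Lemma GL_deriv x : 2*x-1 <> 0 -> is_derive GL x (h2 x / (1 - r2 x)).
Proof.
  intros Hv. pose proof (Qv_pos (2*x-1)) as HQ.
  eapply is_derive_val.
  - unfold GL, Qv, gv. auto_derive. 2: reflexivity. unfold Qv in HQ.
    split; [nra | split; [lra|auto]].
  - rewrite den2. unfold h2, Qv, gv in *. field. split; lra.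
Qed.

Lemma GR_deriv x : gv (2*x-1) <> 0 -> is_derive GR x (h2 x / (1 - r2 x)).
Proof.
  intros Hg. pose proof (Qv_pos (2*x-1)) as HQ.
  eapply is_derive_val.
  - unfold GR, Qv, gv. auto_derive. 2: reflexivity. unfold Qv, gv in *.
    split; [nra | split; [intro E; apply Hg; lra | auto]].
  - rewrite den2. unfold h2, Qv, gv in *. field. split; [lra | intro E; apply Hg; lra].
Qed.

Lemma cont2 x : continuous (fun x => h2 x / (1 - r2 x)) x.
Proof.
  apply (@ex_derive_continuous R_AbsRing R_NormedModule).
  apply (ex_derive_ext (fun x => h2 x * 2 / Qv (2*x-1))).
  - intro t. rewrite den2. pose proof (Qv_pos (2*t-1)).
    match goal with |- ?a = ?b => change (@eq R a b) end. field. lra.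
  - pose proof (Qv_pos (2*x-1)) as HQ. unfold h2, Qv in *. auto_derive. nra.
Qed.

Lemma GL0 : GL 0 = 3/8 * ln 2 + 3/2 * atan (-1).
Proof.
  unfold GL. replace (Qv (2*0-1)) with 2 by (unfold Qv; ring).
  replace (gv (2 * 0 - 1) / (2 * 0 - 1)) with (-1) by (unfold gv; field). reflexivity.
Qed.

Lemma GL14 : GL (1/4) = 3/8 * ln (5/16) + 3/2 * atan (/2).
Proof.
  unfold GL. replace (Qv (2*(1/4)-1)) with (5/16) by (unfold Qv; field).
  replace (gv (2 * (1/4) - 1) / (2 * (1/4) - 1)) with (/2) by (unfold gv; field). reflexivity.
Qed.

Lemma GR14 : GR (1/4) = 3/8 * ln (5/16) - 3/2 * atan 2.
Proof.
  unfold GR. replace (Qv (2*(1/4)-1)) with (5/16) by (unfold Qv; field).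
  replace ((2 * (1/4) - 1) / gv (2 * (1/4) - 1)) with 2 by (unfold gv; field). reflexivity.
Qed.

Lemma GR1 : GR 1 = 3/8 * ln 2 - 3/2 * atan (-1).
Proof.
  unfold GR. replace (Qv (2*1-1)) with 2 by (unfold Qv; ring).
  replace ((2 * 1 - 1) / gv (2 * 1 - 1)) with (-1) by (unfold gv; field). reflexivity.
Qed.

Lemma atan_m1 : atan (-1) = - (PI / 4).
Proof. replace (-1) with (- (1)) by ring. rewrite atan_opp, atan_1. reflexivity. Qed.

Lemma int2 : is_RInt (fun x => h2 x / (1 - r2 x)) 0 1 (3 * PI / 2).
Proof.
  eapply is_RInt_val.
  - apply (is_RInt_Chasles _ 0 (1/4) 1).
    + apply (is_RInt_derive GL).
      * intros x Hx. rewrite Rmin_left, Rmax_right in Hx by lra. apply GL_deriv. lra.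
      * intros x _. apply cont2.
    + apply (is_RInt_derive GR).
      * intros x Hx. rewrite Rmin_left, Rmax_right in Hx by lra. apply GR_deriv.
        unfold gv. nra.
      * intros x _. apply cont2.
  - unfold minus, plus, opp; simpl.
    rewrite GL0, GL14, GR14, GR1, atan_inv, atan_m1 by lra.
    match goal with |- ?a = ?b => change (@eq R a b) end. field.
Qed.

Lemma r2_bounds x : 0 <= x <= 1 -> 0 <= r2 x <= 27/32.
Proof.
  intros Hx. pose proof (w_bounds x Hx). unfold r2. split; [lra|].
  assert (E : 27/32 - 8 * (x * (1-x)^3) = (x - 1/4)^2 * (8*(x-5/4)^2 + 1)) by field.
  assert (0 <= (x - 1/4)^2 * (8*(x-5/4)^2 + 1)).
  { apply Rmult_le_pos. apply pow2_ge_0. pose proof (pow2_ge_0 (x-5/4)). lra. }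
  lra.
Qed.

Lemma series2 : is_series (fun n : nat => term2 (S n)) (3 * PI / 2).
Proof.
  apply (series_int h2 r2 _ _ 120 (27/32)).
  - lra.
  - intros x Hx. pose proof (r2_bounds x Hx). rewrite Rabs_right; lra.
  - intros x Hx. pose proof (r2_bounds x Hx). apply div_bound.
    + unfold h2. assert (0 <= 1 - x) by lra. 
      assert (0 <= x * (1-x)^2) by (apply Rmult_le_pos; [lra| apply pow_le; lra]).
      assert (0 <= x^2 * (1-x)) by (apply Rmult_le_pos; [apply pow_le; lra| lra]).
      assert (0 <= x^3) by (apply pow_le; lra). lra.
    + lra.
    + unfold h2. assert (0 <= 1 - x) by lra.
      assert (x * (1-x)^2 <= 1) by (assert ((1-x)^2 <= 1) by nra; nra).
      assert (x^2 * (1-x) <= 1) by (assert (x^2 <= 1) by nra; nra).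
      assert (x^3 <= 1) by (replace (x^3) with (x*(x*x)) by ring; assert (x*x <= 1) by nra; nra).
      lra.
  - apply int2.
  - apply term2_int.
Qed.

Theorem theorem1p1 :
  is_series (fun n : nat => term1 (S n)) (2 * PI / sqrt 3) /\
  is_series (fun n : nat => term2 (S n)) (3 * PI / 2).
Proof. split; [apply series1 | apply series2]. Qed.
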